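(* There exists a Stackelberg game $(G,L,F)$ that admits no SCE-PAPE, i.e. $\mathbf{X}^{SCE\text{-}PAPE}=\emptyset$.
   Context: A finite game is $G=(N,\{S_p\}_{p\in N},\{u_p\}_{p\in N})$ with players $N=\{1,\dots,n\}$, finite nonempty strategy sets $S_p$, and utilities $u_p:S\to\mathbb{R}$ on $S=\prod_{p\in N}S_p$; write $s=(s_p,s_{-p})$ with $s_{-p}\in S_{-p}=\prod_{q\neq p}S_q$. $\mathcal{X}=\Delta(S)$ is the set of probability distributions on $S$ and $u_p(x)=\sum_{s\in S}x(s)u_p(s)$ for $x\in\mathcal{X}$. For $P\subseteq N$, $\mathcal{X}^{CE}_P$ is the set of $x\in\mathcal{X}$ such that for every $p\in P$ and all $s_p\neq s_p'\in S_p$: $\sum_{s_{-p}\in S_{-p}} x(s_p,s_{-p})\,(u_p(s_p,s_{-p})-u_p(s_p',s_{-p}))\ge 0$; $\mathcal{X}^{CE}=\mathcal{X}^{CE}_N$ is the set of correlated equilibria of $G$. A Stackelberg game (SG) is a triple $(G,L,F)$ with $L\cup F=N$ and $L\cap F=\emptyset$ (leaders and followers). For $P\subseteq N$, $\Pi_P$ is the set of ordered subsets of $P$ (finite sequences of pairwise distinct elements of $P$, including the empty sequence $\varnothing$); for $\pi\in\Pi_P$ and $p\in P$ not occurring in $\pi$, $\pi p$ is $\pi$ with $p$ appended; when used as a set, $\pi$ means its set of entries. $\mathbf{X}=\prod_{\pi\in\Pi_L}\mathcal{X}^{CE}_{\pi\cup F}$, with elements $\mathbf{x}=[x_\pi]_{\pi\in\Pi_L}$.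 For $\mathbf{x}\in\mathbf{X}$ and $\pi\in\Pi_L$, $x_\pi$ is stable if $u_p(x_\pi)\ge u_p(x_{\pi p})$ for all $p\in L\setminus\pi$; $\mathbf{x}$ is stable if $x_\varnothing$ is stable, and perfectly stable if $x_\pi$ is stable for every $\pi\in\Pi_L$; $\mathbf{X}^{S}$ and $\mathbf{X}^{PS}$ denote the sets of stable and perfectly stable elements of $\mathbf{X}$. For $\mathbf{X}'\subseteq\mathbf{X}$ and $\pi\in\Pi_L$, $\mathcal{P}_{L\setminus\pi}(\mathbf{X}')$ is the set of Pareto optimal elements of $\{x'_\pi:\mathbf{x}'\in\mathbf{X}'\}$ with respect to the objectives $u_p$, $p\in L\setminus\pi$ (an element $y$ of the set is Pareto optimal if no $y'$ in the set satisfies $u_p(y')\ge u_p(y)$ for all $p\in L\setminus\pi$ with strict inequality for some such $p$). $\mathbf{x}\in\mathbf{X}$ is an SCE-PAPE if $\mathbf{x}\in\mathbf{X}^{PS}$ and $x_\pi\in\mathcal{P}_{L\setminus\pi}(\mathbf{X}^{PS})$ for every $\pi\in\Pi_L$; $\mathbf{X}^{SCE\text{-}PAPE}$ is the set of SCE-PAPEs. *)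

(* Defs.v *)
From HB Require Import structures.
From mathcomp Require Import all_boot all_order all_algebra.
Set Implicit Arguments. Unset Strict Implicit. Unset Printing Implicit Defensive.
Import Order.TTheory GRing.Theory Num.Theory.
Local Open Scope ring_scope.

(* Players N = 'I_n; player p has strategy set S_p = 'I_(m p) (nonempty iff 0 < m p).
   Strategy profiles S = prod_p S_p. *)
Notation prof m := {dffun forall p, 'I_(m p)}.

Definition dev (n : nat) (m : 'I_n -> nat) (s : {dffun forall q : 'I_n, 'I_(m q)}) (p : 'I_n) (b : 'I_(m p))
  : {dffun forall q : 'I_n, 'I_(m q)} := finfun (dfwith (fun q : 'I_n => s q) b).
Arguments dev {n m} s p b.

Section Game.
Variables (R : realFieldType) (n : nat) (m : 'I_n -> nat)
  (u : 'I_n -> prof m -> R) (L : {set 'I_n}).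

Definition is_dist (x : {ffun prof m -> R}) : Prop :=
  (forall s, 0 <= x s) /\ \sum_(s : prof m) x s = 1.

Definition eu (p : 'I_n) (x : {ffun prof m -> R}) : R :=
  \sum_(s : prof m) x s * u p s.

(* x in X^CE_P (given x in Delta(S)) : the sum over s with s_p = a is the sum
   over s_{-p} in S_{-p} of x(a, s_{-p}) (u_p(a,s_{-p}) - u_p(b,s_{-p})) *)
Definition CE_P (P : {set 'I_n}) (x : {ffun prof m -> R}) : Prop :=
  is_dist x /\
  forall p, p \in P -> forall a b : 'I_(m p), a != b ->
    0 <= \sum_(s : prof m | s p == a) x s * (u p s - u p (dev s p b)).

Definition ordsub (pi : seq 'I_n) : bool := uniq pi && all (fun p => p \in L) pi.

Definition piF (pi : seq 'I_n) : {set 'I_n} :=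
  [set p | (p \in pi) || (p \notin L)].

(* An element of X = prod_{pi in Pi_L} X^CE_{pi u F} is represented by a function
   on sequences; only its values on ordered subsets of L matter. *)
Definition inX (x : seq 'I_n -> {ffun prof m -> R}) : Prop :=
  forall pi, ordsub pi -> CE_P (piF pi) (x pi).

Definition stable_at (x : seq 'I_n -> {ffun prof m -> R}) (pi : seq 'I_n) : Prop :=
  forall p, p \in L -> p \notin pi -> eu p (x (rcons pi p)) <= eu p (x pi).

Definition stable (x : seq 'I_n -> {ffun prof m -> R}) : Prop :=
  inX x /\ stable_at x [::].

Definition perfectly_stable (x : seq 'I_n -> {ffun prof m -> R}) : Prop :=
  inX x /\ forall pi, ordsub pi -> stable_at x pi.

Definition pareto (X' : (seq 'I_n -> {ffun prof m -> R}) -> Prop) (pi : seq 'I_n)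
  (y : {ffun prof m -> R}) : Prop :=
  (exists2 x', X' x' & x' pi = y) /\
  ~ (exists x', [/\ X' x',
       (forall p, p \in L -> p \notin pi -> eu p y <= eu p (x' pi)) &
       (exists p, [/\ p \in L, p \notin pi & eu p y < eu p (x' pi)])]).

Definition SCE_PAPE (x : seq 'I_n -> {ffun prof m -> R}) : Prop :=
  perfectly_stable x /\ forall pi, ordsub pi -> pareto perfectly_stable pi (x pi).

End Game.

(* Main.v *)
Require Import Defs.
From HB Require Import structures.
From mathcomp Require Import all_boot all_order all_algebra.
From mathcomp Require Import ring lra.
Import Order.TTheory GRing.Theory Num.Theory.
Local Open Scope ring_scope.
Set Implicit Arguments. Unset Strict Implicit. Unset Printing Implicit Defensive.


Definition m3 : 'I_3 -> nat := fun _ => 2%N.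
Notation P3 := (prof m3).

Definition mk (i j k : 'I_2) : P3 :=
  [ffun p : 'I_3 => (if val p == 0%N then i else if val p == 1%N then j else k) : 'I_2].

Definition unmk (s : P3) : 'I_2 * 'I_2 * 'I_2 :=
  (s (0 : 'I_3), s (1 : 'I_3), s (2 : 'I_3)).

Lemma mkK : cancel unmk (fun t => mk t.1.1 t.1.2 t.2).
Proof.
move=> s; apply/ffunP => -[[|[|[|//]]] Hp]; rewrite ffunE /=;
  congr (s _); exact: val_inj.
Qed.

Lemma unmkK : cancel (fun t => mk t.1.1 t.1.2 t.2) unmk.
Proof. by move=> [[i j] k]; rewrite /unmk !ffunE. Qed.

Lemma sum_prof (R : realFieldType) (F : P3 -> R) :
  \sum_(s : P3) F s =
  F (mk 0 0 0) + F (mk 0 0 1) + F (mk 0 1 0) + F (mk 0 1 1) +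
  F (mk 1 0 0) + F (mk 1 0 1) + F (mk 1 1 0) + F (mk 1 1 1).
Proof.
rewrite (reindex (fun t : 'I_2 * 'I_2 * 'I_2 => mk t.1.1 t.1.2 t.2)) /=; last first.
  by exists unmk => s _; [apply: unmkK | apply: mkK].
rewrite -(pair_big xpredT xpredT (fun a k => F (mk a.1 a.2 k))) /=.
rewrite -(pair_big xpredT xpredT (fun i j => \sum_(k < 2) F (mk i j k))) /=.
rewrite !big_ord_recr !big_ord0 /= !add0r.
have E0 : widen_ord (leqnSn 1) ord_max = 0 :> 'I_2 by apply: val_inj.
have E1 : (ord_max : 'I_2) = 1 by apply: val_inj.
by rewrite !E0 !E1 !addrA.
Qed.

Definition tbl (R : realFieldType) (p i j k : nat) : R :=
  let t := (p, i, j, k) in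
  if t == (0, 0, 0, 1)%N then 2 else if t == (0, 0, 1, 1)%N then 2
  else if t == (0, 1, 1, 1)%N then 1
  else if t == (1, 0, 0, 1)%N then 1 else if t == (1, 0, 1, 1)%N then 2
  else if t == (1, 1, 1, 1)%N then 2 else if t == (2, 0, 1, 1)%N then -1
  else 0.

Definition uu (R : realFieldType) (p : 'I_3) (s : P3) : R :=
  tbl R p (s (0 : 'I_3)) (s (1 : 'I_3)) (s (2 : 'I_3)).

Lemma uu_mk (R : realFieldType) p i j k : uu R p (mk i j k) = tbl R p i j k.
Proof. by rewrite /uu !ffunE. Qed.

Lemma dev_mk (p : 'I_3) (b : 'I_(m3 p)) i j k :
  dev (mk i j k) p b =
  mk (if val p == 0%N then b else i) (if val p == 1%N then b else j)
     (if val p == 2%N then b else k).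
Proof.
move: p b => [[|[|[|//]]] Hp] b; apply/ffunP => -[[|[|[|//]]] Hq];
  rewrite !ffunE /=;
  first [ rewrite (bool_irrelevance Hq Hp) dfwith_in //
        | rewrite dfwith_out ?ffunE //].
Qed.



Definition delta (R : realFieldType) (s0 : P3) : {ffun P3 -> R} := [ffun s => if s == s0 then 1 else 0].

Lemma sum_single (R : realFieldType) (F : P3 -> R) s0 : (forall s, s != s0 -> F s = 0) -> \sum_s F s = F s0.
Proof.
move=> H; rewrite (bigD1 s0) //= big1 ?addr0 // => s; exact: H.
Qed.

Lemma eu_delta (R : realFieldType) p s0 : eu (uu R) p (delta R s0) = uu R p s0.
Proof.
rewrite /eu (@sum_single _ _ s0) ?ffunE ?eqxx ?mul1r // => s /negPf.
by rewrite ffunE => ->; rewrite mul0r.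
Qed.

Lemma ce_delta (R : realFieldType) (P : {set 'I_3}) s0 :
  (forall p, p \in P -> forall b : 'I_(m3 p), uu R p (dev s0 p b) <= uu R p s0) ->
  CE_P (uu R) P (delta R s0).
Proof.
move=> H; split; first split.
- by move=> s; rewrite ffunE; case: ifP.
- by rewrite (@sum_single _ _ s0) ?ffunE ?eqxx // => s /negPf; rewrite ffunE => ->.
move=> p Hp a b _; rewrite big_mkcond (@sum_single _ _ s0) /=.
  rewrite ffunE eqxx mul1r; case: ifP => // _; rewrite subr_ge0; exact: H.
by move=> s /negPf Hs; rewrite ffunE Hs mul0r; case: ifP.
Qed.

Definition Lset : {set 'I_3} := [set 0; 1].

Definition W (R : realFieldType) (a : 'I_3) (s1 : P3) (pi : seq 'I_3) : {ffun P3 -> R} :=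
  if (pi == [::]) || (pi == [:: a]) then delta R s1 else delta R (mk 0 0 0).

Lemma W_ps (R : realFieldType) (a : 'I_3) s1 :
  (forall pi, ordsub Lset pi -> (pi == [::]) || (pi == [:: a]) ->
     CE_P (uu R) (piF Lset pi) (delta R s1)) ->
  CE_P (uu R) setT (delta R (mk 0 0 0)) ->
  (forall p, p \in Lset -> uu R p (mk 0 0 0) <= uu R p s1) ->
  perfectly_stable (uu R) Lset (W R a s1).
Proof.
move=> H1 H0 Hle; split.
  move=> pi Hpi; rewrite /W; case: ifP => Hc; first exact: H1.
  case: H0 => Hd H0; split => // p _; exact: H0.
move=> pi _ p Hp Hnp; rewrite /stable_at /W !(fun_if (eu (uu R) p)) !eu_delta.
case: pi Hnp => [|q pi] Hnp /=; rewrite ?eqseq_cons ?andbT.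
  by case: ifP => _; [exact: lexx | exact: Hle].
have -> : (rcons pi p == [::]) = false by case: pi {Hnp}.
rewrite andbF /=; case: ifP => _; [exact: Hle | exact: lexx].
Qed.



Lemma ce000 (R : realFieldType) : CE_P (uu R) setT (delta R (mk 0 0 0)).
Proof.
apply: ce_delta => -[[|[|[|//]]] Hp] _ [[|[|//]] Hb];
  rewrite dev_mk !uu_mk /tbl /=; lra.
Qed.

Lemma ce001 (R : realFieldType) (P : {set 'I_3}) : (1 : 'I_3) \notin P -> CE_P (uu R) P (delta R (mk 0 0 1)).
Proof.
move=> H1; apply: ce_delta => -[[|[|[|//]]] Hp] HP [[|[|//]] Hb];
  rewrite dev_mk !uu_mk /tbl /=; try lra.
all: by move: H1; rewrite (_ : (1 : 'I_3) = Ordinal Hp) ?HP //; apply: val_inj.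
Qed.

Lemma ce111 (R : realFieldType) (P : {set 'I_3}) : (0 : 'I_3) \notin P -> CE_P (uu R) P (delta R (mk 1 1 1)).
Proof.
move=> H1; apply: ce_delta => -[[|[|[|//]]] Hp] HP [[|[|//]] Hb];
  rewrite dev_mk !uu_mk /tbl /=; try lra.
all: by move: H1; rewrite (_ : (0 : 'I_3) = Ordinal Hp) ?HP //; apply: val_inj.
Qed.

Lemma ps0 (R : realFieldType) : perfectly_stable (uu R) Lset (W R 0 (mk 0 0 1)).
Proof.
apply: W_ps; last 2 first.
- exact: ce000.
- by move=> -[[|[|[|//]]] Hp] _; rewrite !uu_mk /tbl /=; lra.
move=> pi _ /orP[] /eqP -> ; apply: ce001; by rewrite /piF /Lset !inE.
Qed.

Lemma ps1 (R : realFieldType) : perfectly_stable (uu R) Lset (W R 1 (mk 1 1 1)).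
Proof.
apply: W_ps; last 2 first.
- exact: ce000.
- by move=> -[[|[|[|//]]] Hp] _; rewrite !uu_mk /tbl /=; lra.
move=> pi _ /orP[] /eqP -> ; apply: ce111; by rewrite /piF /Lset !inE.
Qed.


Lemma nn8 (R : realFieldType) (y : {ffun P3 -> R}) : is_dist y ->
  0 <= y (mk 0 0 0) /\ 0 <= y (mk 0 0 1) /\ 0 <= y (mk 0 1 0) /\ 0 <= y (mk 0 1 1) /\
      0 <= y (mk 1 0 0) /\ 0 <= y (mk 1 0 1) /\ 0 <= y (mk 1 1 0) /\ 0 <= y (mk 1 1 1) /\
   y (mk 0 0 0) + y (mk 0 0 1) + y (mk 0 1 0) + y (mk 0 1 1) +
   y (mk 1 0 0) + y (mk 1 0 1) + y (mk 1 1 0) + y (mk 1 1 1) = 1.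
Proof. by move=> [H Hs]; rewrite sum_prof in Hs; do !split. Qed.

Lemma eu0E (R : realFieldType) (y : {ffun P3 -> R}) :
  eu (uu R) 0 y = 2 * y (mk 0 0 1) + 2 * y (mk 0 1 1) + y (mk 1 1 1).
Proof. rewrite /eu sum_prof !uu_mk /tbl /=; lra. Qed.

Lemma eu1E (R : realFieldType) (y : {ffun P3 -> R}) :
  eu (uu R) 1 y = y (mk 0 0 1) + 2 * y (mk 0 1 1) + 2 * y (mk 1 1 1).
Proof. rewrite /eu sum_prof !uu_mk /tbl /=; lra. Qed.

Lemma ce2 (R : realFieldType) (P : {set 'I_3}) (y : {ffun P3 -> R}) : (2 : 'I_3) \in P ->
  CE_P (uu R) P y -> y (mk 0 1 1) <= 0.
Proof.
move=> H [_ Hc]; have := Hc (2 : 'I_3) H (1 : 'I_2) (0 : 'I_2) isT.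
rewrite big_mkcond sum_prof /= !dev_mk !uu_mk !ffunE /= /tbl /=; lra.
Qed.

Lemma ce0 (R : realFieldType) (P : {set 'I_3}) (y : {ffun P3 -> R}) : (0 : 'I_3) \in P ->
  CE_P (uu R) P y -> 0 <= - 2 * y (mk 1 0 1) - y (mk 1 1 1).
Proof.
move=> H [_ Hc]; have := Hc (0 : 'I_3) H (1 : 'I_2) (0 : 'I_2) isT.
rewrite big_mkcond sum_prof /= !dev_mk !uu_mk !ffunE /= /tbl /=; lra.
Qed.

Lemma ce1 (R : realFieldType) (P : {set 'I_3}) (y : {ffun P3 -> R}) : (1 : 'I_3) \in P ->
  CE_P (uu R) P y -> 0 <= - y (mk 0 0 1) - 2 * y (mk 1 0 1).
Proof.
move=> H [_ Hc]; have := Hc (1 : 'I_3) H (0 : 'I_2) (1 : 'I_2) isT.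
rewrite big_mkcond sum_prof /= !dev_mk !uu_mk !ffunE /= /tbl /=; lra.
Qed.

Theorem proposition1 (R : rcfType) :
  exists (n : nat) (m : 'I_n -> nat) (u : 'I_n -> prof m -> R) (L : {set 'I_n}),
    (forall p, (0 < m p)%N) /\
    forall x : seq 'I_n -> {ffun prof m -> R}, ~ SCE_PAPE u L x.
Proof.
exists 3%N; exists m3; exists (uu R); exists Lset; split => // x [[HX HS] HP].
have o0 : ordsub Lset [::] by [].
have o1 : ordsub Lset [:: 0] by rewrite /ordsub /= /Lset !inE.
have o2 : ordsub Lset [:: 1] by rewrite /ordsub /= /Lset !inE.
have Ce := HX _ o0; have C0 := HX _ o1; have C1 := HX _ o2.
have := nn8 Ce.1; have := nn8 C0.1; have := nn8 C1.1; move=> [?[?[?[?[?[?[?[? ?]]]]]]]] [?[?[?[?[?[?[?[? ?]]]]]]]] [?[?[?[?[?[?[?[? ?]]]]]]]].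
have := ce2 _ Ce; rewrite /piF /Lset !inE => /(_ isT) ?.
have := ce2 _ C0; rewrite /piF /Lset !inE => /(_ isT) ?.
have := ce2 _ C1; rewrite /piF /Lset !inE => /(_ isT) ?.
have := ce0 _ C0; rewrite /piF /Lset !inE => /(_ isT) ?.
have := ce1 _ C1; rewrite /piF /Lset !inE => /(_ isT) ?.
have S0 : eu (uu R) 0 (x [:: 0]) <= eu (uu R) 0 (x [::]).
  by apply: (HS _ o0) => //; rewrite /Lset !inE.
have S1 : eu (uu R) 1 (x [:: 1]) <= eu (uu R) 1 (x [::]).
  by apply: (HS _ o0) => //; rewrite /Lset !inE.
have U1 : 1 <= eu (uu R) 1 (x [:: 0]).
  case: (lerP 1 (eu (uu R) 1 (x [:: 0]))) => // Hlt; exfalso.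
  apply: (HP _ o1).2; exists (W R 0 (mk 0 0 1)); split.
  - exact: ps0.
  - move=> p; rewrite /Lset !inE => /orP[] /eqP -> // _.
    rewrite /W eqxx orbT eu_delta uu_mk /tbl /=; lra.
  - exists 1; split => //; first by rewrite /Lset !inE.
    rewrite /W eqxx orbT eu_delta uu_mk /tbl /=; lra.
have U0 : 1 <= eu (uu R) 0 (x [:: 1]).
  case: (lerP 1 (eu (uu R) 0 (x [:: 1]))) => // Hlt; exfalso.
  apply: (HP _ o2).2; exists (W R 1 (mk 1 1 1)); split.
  - exact: ps1.
  - move=> p; rewrite /Lset !inE => /orP[] /eqP -> // _.
    rewrite /W eqxx orbT eu_delta uu_mk /tbl /=; lra.
  - exists 0; split => //; first by rewrite /Lset !inE.
    rewrite /W eqxx orbT eu_delta uu_mk /tbl /=; lra.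
move: S0 S1 U0 U1; rewrite !eu0E !eu1E; lra.
Qed.
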